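(* Let $(\mathfrak g,D)$ be a difference Lie algebra. Set $C^1(\mathfrak g,D)=\mathrm{Hom}(\mathfrak g,\mathfrak g)$ and $C^n(\mathfrak g,D)=\mathrm{Hom}(\wedge^n\mathfrak g,\mathfrak g)\oplus\mathrm{Hom}(\wedge^{n-1}\mathfrak g,\mathfrak g)$ for $n\ge2$, and define $\bar\delta:C^n(\mathfrak g,D)\to C^{n+1}(\mathfrak g,D)$ by $\bar\delta(f,\theta)=(d^{CE}_{\mathrm{ad}}f,\ d^{CE}_{\mathrm{ad}_D}\theta+T(f))$ (for $n=1$, $\bar\delta(f)=(d^{CE}_{\mathrm{ad}}f,T(f))$). Then $\bar\delta\circ\bar\delta=0$.
   Context: A difference Lie algebra $(\mathfrak g,D)$ is a Lie algebra $\mathfrak g$ with a linear map $D:\mathfrak g\to\mathfrak g$ such that $D[x,y]=[x,D(y)]-[y,D(x)]+[D(x),D(y)]$ for all $x,y$. $d^{CE}_{\mathrm{ad}}$ is the Chevalley–Eilenberg differential of $\mathfrak g$ with coefficients in the adjoint representation, and $d^{CE}_{\mathrm{ad}_D}$ the one with coefficients in the representation $\mathrm{ad}_D(x)u=[x,u]+[D(x),u]$. For $f\in\mathrm{Hom}(\wedge^n\mathfrak g,\mathfrak g)$, $T(f)\in\mathrm{Hom}(\wedge^n\mathfrak g,\mathfrak g)$ is $T(f)(x_1,\dots,x_n)=(-1)^n\big(\sum_{k=1}^n\sum_{1\le i_1<\cdots<i_k\le n}f(y_1,\dots,y_n)-D(f(x_1,\dots,x_n))\big)$, where $y_j=D(x_j)$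 if $j\in\{i_1,\dots,i_k\}$ and $y_j=x_j$ otherwise. *)

(* Defs.v *)
From HB Require Import structures.
From mathcomp Require Import all_boot all_order all_algebra.
Set Implicit Arguments. Unset Strict Implicit. Unset Printing Implicit Defensive.
Import GRing.Theory.
Local Open Scope ring_scope.

Section DiffLie.
Variables (K : fieldType) (g : lmodType K).

Definition is_lie_bracket (br : g -> g -> g) : Prop :=
  [/\ (forall a x y z, br (a *: x + y) z = a *: br x z + br y z),
      (forall a x y z, br z (a *: x + y) = a *: br z x + br z y),
      (forall x, br x x = 0) &
      (forall x y z, br x (br y z) + br y (br z x) + br z (br x y) = 0)].

Definition is_linear_map (D : g -> g) : Prop :=
  forall a x y, D (a *: x + y) = a *: D x + D y.

Definition is_difference_lie (br : g -> g -> g) (D : g -> g) : Prop :=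
  [/\ is_lie_bracket br, is_linear_map D &
      forall x y, D (br x y) = br x (D y) - br y (D x) + br (D x) (D y)].

(* n-cochains: maps on lists of arguments, only meaningful on lists of size n. *)
Definition cochain := seq g -> g.

Definition is_alt_multilinear (n : nat) (f : cochain) : Prop :=
  (forall (s t : seq g) (a : K) (x y : g), (size s + size t).+1 = n ->
     f (s ++ (a *: x + y) :: t) = a *: f (s ++ x :: t) + f (s ++ y :: t)) /\
  (forall (s t u : seq g) (x : g), (size s + size t + size u).+2 = n ->
     f (s ++ x :: t ++ x :: u) = 0).

Definition cadd (f h : cochain) : cochain := fun s => f s + h s.

Definition dropi (i : nat) (s : seq g) : seq g := take i s ++ drop i.+1 s.

Definition dCE (br : g -> g -> g) (rho : g -> g -> g) (f : cochain) : cochain :=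
  fun s =>
    \sum_(i < size s) (-1) ^+ i *: rho (nth 0 s i) (f (dropi i s)) +
    \sum_(j < size s) \sum_(i < j)
       (-1) ^+ (i + j) *: f (br (nth 0 s i) (nth 0 s j) :: dropi i (dropi j s)).

Definition ad (br : g -> g -> g) : g -> g -> g := fun x u => br x u.
Definition adD (br : g -> g -> g) (D : g -> g) : g -> g -> g :=
  fun x u => br x u + br (D x) u.

Definition Top (D : g -> g) (n : nat) (f : cochain) : cochain :=
  fun s => (-1) ^+ n *:
    (\sum_(S : {set 'I_n} | S != set0)
        f [seq (if i \in S then D (nth 0 s i) else nth 0 s i) | i <- enum 'I_n]
     - D (f s)).

Definition dbar (br : g -> g -> g) (D : g -> g) (n : nat)
    (p : cochain * cochain) : cochain * cochain :=
  (dCE br (ad br) p.1, cadd (dCE br (adD br D) p.2) (Top D n p.1)).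

Definition dbar1 (br : g -> g -> g) (D : g -> g) (f : cochain) : cochain * cochain :=
  (dCE br (ad br) f, Top D 1 f).

End DiffLie.

(* Main.v *)
Require Import Defs.
From mathcomp Require Import all_boot all_order all_algebra zify.
Set Implicit Arguments. Unset Strict Implicit. Unset Printing Implicit Defensive.
Import GRing.Theory.
Local Open Scope ring_scope.



Section Sums.
Variables (K : fieldType) (g : lmodType K).

Definition sum1 (s : seq g) (F : g -> seq g -> g) : g :=
  \sum_(0 <= i < size s) (-1) ^+ i *: F (nth 0 s i) (dropi i s).
Definition sum2 (s : seq g) (F : g -> g -> seq g -> g) : g :=
  \sum_(0 <= j < size s) \sum_(0 <= i < j)
     (-1) ^+ (i + j) *: F (nth 0 s i) (nth 0 s j) (dropi i (dropi j s)).

Lemma dropi0 (y : g) t : dropi 0 (y :: t) = t.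
Proof. by rewrite /dropi /= drop0. Qed.
Lemma dropiS (y : g) t i : dropi i.+1 (y :: t) = y :: dropi i t.
Proof. by []. Qed.
Lemma size_dropi i (s : seq g) : (i < size s)%N -> size (dropi i s) = (size s).-1.
Proof.
move=> lt; rewrite /dropi size_cat size_take size_drop lt; lia.
Qed.
Lemma dropi_map (h : g -> g) i s : dropi i (map h s) = map h (dropi i s).
Proof. by rewrite /dropi map_cat map_take map_drop. Qed.

Lemma sum1_cons y t F :
  sum1 (y :: t) F = F y t - sum1 t (fun a r => F a (y :: r)).
Proof.
rewrite /sum1 /= big_nat_recl // expr0 scale1r dropi0; congr (_ + _).
rewrite -sumrN; apply: eq_bigr => i _.
by rewrite exprS mulN1r scaleNr ?mul1r.
Qed.

Lemma sum2_cons y t F :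
  sum2 (y :: t) F = - sum1 t (F y) + sum2 t (fun a b r => F a b (y :: r)).
Proof.
rewrite /sum2 /sum1 /= big_nat_recl // big_geq // add0r -sumrN -big_split /=.
apply: eq_bigr => j _; rewrite big_nat_recl // add0n dropiS dropi0 /=.
congr (_ + _); first by rewrite exprS mulN1r scaleNr ?mul1r.
apply: eq_bigr => i _; by rewrite addSn addnS !exprS !mulN1r opprK ?mul1r.
Qed.

Lemma sum1_ext s F G :
  (forall a r, (size r).+1 = size s -> F a r = G a r) -> sum1 s F = sum1 s G.
Proof.
move=> H; apply: eq_big_nat => i /andP[_ lt]; rewrite H // (size_dropi lt); lia.
Qed.

Lemma sum2_ext s F G :
  (forall a b r, (size r).+2 = size s -> F a b r = G a b r) -> sum2 s F = sum2 s G.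
Proof.
move=> H; apply: eq_big_nat => j /andP[_ lt]; apply: eq_big_nat => i /andP[_ lij].
have lt2 : (i < size (dropi j s))%N by rewrite (size_dropi lt); lia.
by rewrite H // (size_dropi lt2) (size_dropi lt); lia.
Qed.

Lemma sum1D s F G : sum1 s (fun a r => F a r + G a r) = sum1 s F + sum1 s G.
Proof. by rewrite /sum1 -big_split; apply: eq_bigr => i _; rewrite scalerDr. Qed.
Lemma sum1N s F : sum1 s (fun a r => - F a r) = - sum1 s F.
Proof. by rewrite /sum1 -sumrN; apply: eq_bigr => i _; rewrite scalerN. Qed.
Lemma sum2D s F G : sum2 s (fun a b r => F a b r + G a b r) = sum2 s F + sum2 s G.
Proof.
rewrite /sum2 -big_split; apply: eq_bigr => j _; rewrite -big_split.
by apply: eq_bigr => i _; rewrite scalerDr.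
Qed.
Lemma sum2N s F : sum2 s (fun a b r => - F a b r) = - sum2 s F.
Proof.
rewrite /sum2 -sumrN; apply: eq_bigr => j _; rewrite -sumrN.
by apply: eq_bigr => i _; rewrite scalerN.
Qed.
Lemma sum1_0 s : sum1 s (fun _ _ => 0) = 0.
Proof. by rewrite /sum1 big1 // => i _; rewrite scaler0. Qed.
Lemma sum2_0 s : sum2 s (fun _ _ _ => 0) = 0.
Proof. by rewrite /sum2 big1 // => j _; rewrite big1 // => i _; rewrite scaler0. Qed.

Lemma sum1_lin (h : g -> g) s F :
  (forall c x y, h (c *: x + y) = c *: h x + h y) ->
  h (sum1 s F) = sum1 s (fun a r => h (F a r)).
Proof.
move=> hl; have h0 : h 0 = 0.
  by have := hl 1 0 0; rewrite !scale1r addr0 => E; apply: (addrI (h 0)); rewrite addr0 -E.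
have hD : {morph h : x y / x + y}. by move=> x y; have := hl 1 x y; rewrite !scale1r.
rewrite /sum1 (big_morph h hD h0); apply: eq_bigr => i _.
by rewrite -[_ *: h _]addr0 -h0 -hl addr0.
Qed.

Lemma sum2_lin (h : g -> g) s F :
  (forall c x y, h (c *: x + y) = c *: h x + h y) ->
  h (sum2 s F) = sum2 s (fun a b r => h (F a b r)).
Proof.
move=> hl; have h0 : h 0 = 0.
  by have := hl 1 0 0; rewrite !scale1r addr0 => E; apply: (addrI (h 0)); rewrite addr0 -E.
have hD : {morph h : x y / x + y}. by move=> x y; have := hl 1 x y; rewrite !scale1r.
rewrite /sum2 (big_morph h hD h0); apply: eq_bigr => j _.
rewrite (big_morph h hD h0); apply: eq_bigr => i _.
by rewrite -[_ *: h _]addr0 -h0 -hl addr0.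
Qed.

Lemma sum1_map (h : g -> g) s F :
  sum1 (map h s) F = sum1 s (fun a r => F (h a) (map h r)).
Proof.
rewrite /sum1 size_map; apply: eq_big_nat => i /andP[_ lt].
by rewrite (nth_map 0) // dropi_map.
Qed.
Lemma sum2_map (h : g -> g) s F :
  sum2 (map h s) F = sum2 s (fun a b r => F (h a) (h b) (map h r)).
Proof.
rewrite /sum2 size_map; apply: eq_big_nat => j /andP[_ lt].
apply: eq_big_nat => i /andP[_ lij].
by rewrite !(nth_map 0) ?(ltn_trans lij) // !dropi_map.
Qed.

End Sums.



Section Comb.
Variables (K : fieldType) (g : lmodType K).
Implicit Types (s t : seq g).

Lemma sum1_nil (F : g -> seq g -> g) : sum1 [::] F = 0.
Proof. by rewrite /sum1 big_geq. Qed.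
Lemma sum2_nil (F : g -> g -> seq g -> g) : sum2 [::] F = 0.
Proof. by rewrite /sum2 big_geq. Qed.

Lemma L1 s (H : g -> g -> seq g -> g) :
  sum1 s (fun a r => sum1 r (H a)) = sum2 s (fun a b r => H b a r - H a b r).
Proof.
elim: s H => [|y t IH] H; first by rewrite sum1_nil sum2_nil.
rewrite sum1_cons sum2_cons.
rewrite (@sum1_ext _ _ t (fun a r => sum1 (y :: r) (H a))
   (fun a r => H a y r - sum1 r (fun b r' => H a b (y :: r')))); last by move=> a r _; rewrite sum1_cons.
rewrite sum1D sum1N IH sum1D sum1N.
by rewrite !opprB addrA addrAC.
Qed.
Lemma DS s (H : g -> g -> seq g -> g) :
  sum1 s (fun a r => sum1 r (H a)) = - sum1 s (fun a r => sum1 r (fun b r' => H b a r')).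
Proof. by rewrite !L1 -sum2N; apply: sum2_ext => a b r _; rewrite opprB. Qed.

Lemma L2 s (G : g -> g -> g -> seq g -> g) :
  sum1 s (fun a r => sum2 r (G a)) = sum2 s (fun a b r => sum1 r (fun e r' => G e a b r')).
Proof.
elim: s G => [|y t IH] G; first by rewrite sum1_nil sum2_nil.
rewrite sum1_cons sum2_cons.
rewrite (@sum1_ext _ _ t (fun a r => sum2 (y :: r) (G a))
   (fun a r => - sum1 r (G a y) + sum2 r (fun b c r' => G a b c (y :: r')))); last by move=> a r _; rewrite sum2_cons.
rewrite (@sum2_ext _ _ t (fun a b r => sum1 (y :: r) (fun e r' => G e a b r'))
   (fun a b r => G y a b r - sum1 r (fun e r' => G e a b (y :: r')))); last by move=> a b r _; rewrite sum1_cons.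
rewrite sum1D sum1N IH sum2D sum2N DS.
by rewrite opprK opprD addrCA.
Qed.
Lemma L3 s (G : g -> g -> g -> seq g -> g) :
  (forall a b c r, (size r).+3 = size s ->
      G a b c r = - G b a c r /\ G a b c r + G b c a r + G c a b r = 0) ->
  sum2 s (fun a b r => sum1 r (G a b)) = 0.
Proof.
elim: s G => [|y t IH] G hG; first by rewrite sum2_nil.
rewrite sum2_cons.
rewrite (@sum2_ext _ _ t (fun a b r => sum1 (y :: r) (G a b))
   (fun a b r => G a b y r - sum1 r (fun e r' => G a b e (y :: r')))); last by move=> a b r _; rewrite sum1_cons.
rewrite sum2D sum2N IH; last by move=> a b c r hr; apply: hG => /=; rewrite hr.
rewrite L1.
rewrite oppr0 addr0 -sum2N -sum2D -(sum2_0 t); apply: sum2_ext => a b r hr.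
have [_ C] := hG a b y r ltac:(by rewrite /= -hr).
have [As _] := hG b y a r ltac:(by rewrite /= -hr).
move: C; rewrite As => C.
by rewrite opprB addrC addrA addrAC.
Qed.
Lemma L4 s (G : g -> g -> g -> g -> seq g -> g) :
  (forall a b c e r, (size r).+4 = size s -> G a b c e r = - G c e a b r) ->
  sum2 s (fun a b r => sum2 r (G a b)) = 0.
Proof.
elim: s G => [|y t IH] G hG; first by rewrite sum2_nil.
rewrite sum2_cons.
rewrite (@sum2_ext _ _ t (fun a b r => sum2 (y :: r) (G a b))
   (fun a b r => - sum1 r (G a b y) + sum2 r (fun c e r' => G a b c e (y :: r')))); last by move=> a b r _; rewrite sum2_cons.
rewrite sum2D sum2N IH; last by move=> a b c e r hr; apply: hG => /=; rewrite hr.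
rewrite L2 addr0.
have -> : sum2 t (fun a b r => sum1 r (G a b y)) =
          - sum2 t (fun a b r => sum1 r (fun e r' => G y e a b r')).
  rewrite -sum2N; apply: sum2_ext => a b r hr; rewrite -sum1N; apply: sum1_ext => e r' hr'.
  by apply: hG => /=; rewrite -hr -hr'.
by rewrite opprK addNr.
Qed.
End Comb.



Section DD.
Variables (K : fieldType) (g : lmodType K).

Lemma dCE_E (br rho : g -> g -> g) (f : cochain g) s :
  dCE br rho f s = sum1 s (fun a r => rho a (f r)) + sum2 s (fun a b r => f (br a b :: r)).
Proof.
rewrite /dCE /sum1 /sum2; congr (_ + _); first by rewrite big_mkord.
rewrite big_mkord; apply: eq_bigr => j _; by rewrite big_mkord.
Qed.

Variable br : g -> g -> g.
Hypothesis hL : is_lie_bracket br.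

Lemma br_addl x y z : br (x + y) z = br x z + br y z.
Proof. by case: hL => l1 _ _ _; have := l1 1 x y z; rewrite !scale1r. Qed.
Lemma br_addr z x y : br z (x + y) = br z x + br z y.
Proof. by case: hL => _ l2 _ _; have := l2 1 x y z; rewrite !scale1r. Qed.
Lemma br_0l z : br 0 z = 0.
Proof. by apply: (addrI (br 0 z)); rewrite -br_addl !addr0. Qed.
Lemma br_0r z : br z 0 = 0.
Proof. by apply: (addrI (br z 0)); rewrite -br_addr !addr0. Qed.
Lemma br_oppl x z : br (- x) z = - br x z.
Proof. by apply: (addrI (br x z)); rewrite -br_addl !subrr br_0l. Qed.
Lemma br_oppr z x : br z (- x) = - br z x.
Proof. by apply: (addrI (br z x)); rewrite -br_addr !subrr br_0r. Qed.
Lemma br_scaler c z x : br z (c *: x) = c *: br z x.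
Proof. by case: hL => _ l2 _ _; have := l2 c x 0 z; rewrite !addr0 br_0r addr0. Qed.
Lemma br_anti a b : br a b = - br b a.
Proof.
case: hL => _ _ alt _; apply: (addrI (br b a)); rewrite subrr.
have := alt (a + b); rewrite !br_addl !br_addr !alt add0r addr0 => E.
by rewrite addrC.
Qed.
Lemma br_jac a b c : br (br a b) c + br (br b c) a + br (br c a) b = 0.
Proof.
case: hL => _ _ _ jac.
rewrite (br_anti (br a b)) (br_anti (br b c)) (br_anti (br c a)) -!opprD.
by rewrite (addrC (br c _)) -addrA (addrC (br c _)) addrA jac oppr0.
Qed.
Lemma br_rep a b v : br (br a b) v = br a (br b v) - br b (br a v).
Proof.
case: hL => _ _ _ jac; have := jac a b v.
rewrite (br_anti v a) br_oppr (br_anti v (br a b)).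
by move=> /eqP; rewrite subr_eq0 => /eqP ->.
Qed.

Lemma dd0 (rho : g -> g -> g) (f : cochain g) m :
 (forall a c x y, rho a (c *: x + y) = c *: rho a x + rho a y) ->
 (forall a b v, rho (br a b) v = rho a (rho b v) - rho b (rho a v)) ->
 (forall u v r, (size r).+1 = m -> f ((u+v)::r) = f (u::r) + f (v::r)) ->
 (forall a b r, (size r).+2 = m -> f (a::b::r) = - f (b::a::r)) ->
 forall s, size s = m.+2 -> dCE br rho (dCE br rho f) s = 0.
Proof.
move=> rl rrep fD fS s hs.
have f0 : forall r, (size r).+1 = m -> f (0 :: r) = 0.
  by move=> r hr; apply: (addrI (f (0 :: r))); rewrite -fD // !addr0.
have fN : forall u r, (size r).+1 = m -> f (- u :: r) = - f (u :: r).
  by move=> u r hr; apply: (addrI (f (u :: r))); rewrite -fD // !subrr f0.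
have rD : forall a x y, rho a (x + y) = rho a x + rho a y.
  by move=> a x y; have := rl a 1 x y; rewrite !scale1r.
rewrite dCE_E.
have E1 : sum1 s (fun a r => rho a (dCE br rho f r)) =
   sum1 s (fun a r => sum1 r (fun b r' => rho a (rho b (f r')))) +
   sum1 s (fun a r => sum2 r (fun b c r' => rho a (f (br b c :: r')))).
  rewrite -sum1D; apply: sum1_ext => a r _.
  by rewrite dCE_E rD sum1_lin // sum2_lin.
have E2 : sum2 s (fun a b r => dCE br rho f (br a b :: r)) =
   sum2 s (fun a b r => rho (br a b) (f r))
   - sum2 s (fun a b r => sum1 r (fun e r' => rho e (f (br a b :: r'))))
   - sum2 s (fun a b r => sum1 r (fun e r' => f (br (br a b) e :: r')))
   + sum2 s (fun a b r => sum2 r (fun e h r' => f (br e h :: br a b :: r'))).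
  rewrite -!sum2N -!sum2D; apply: sum2_ext => a b r _.
  by rewrite dCE_E sum1_cons sum2_cons !addrA.
have Z3 : sum2 s (fun a b r => sum1 r (fun e r' => f (br (br a b) e :: r'))) = 0.
  apply: L3 => a b c r hr; have hr' : (size r).+1 = m by move: hr; rewrite hs => -[].
  split; first by rewrite (br_anti b a) br_oppl fN // opprK.
  by rewrite -!fD // br_jac f0.
have Z4 : sum2 s (fun a b r => sum2 r (fun e h r' => f (br e h :: br a b :: r'))) = 0.
  apply: L4 => a b c e r hr; apply: fS; by move: hr; rewrite hs => -[].
rewrite E1 E2 Z3 Z4 L1 L2 subr0 addr0.
have -> : sum2 s (fun a b r => rho (br a b) (f r)) =
          - sum2 s (fun a b r => rho b (rho a (f r)) - rho a (rho b (f r))).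
  by rewrite -sum2N; apply: sum2_ext => a b r _; rewrite rrep opprB.
by rewrite -opprD subrr.
Qed.

End DD.



Section Add.
Variables (K : fieldType) (g : lmodType K).

Lemma AddS1 (p q : seq g) (u v : g) (F : g -> seq g -> g) :
 (forall a1 a2 r, (size r).+1 = (size p + size q)%N.+1 -> F (a1 + a2) r = F a1 r + F a2 r) ->
 (forall a (p0 q0 : seq g) (x y : g), (size p0 + size q0)%N.+2 = (size p + size q)%N.+1 ->
     F a (p0 ++ (x+y)::q0) = F a (p0 ++ x::q0) + F a (p0 ++ y :: q0)) ->
 sum1 (p ++ (u+v)::q) F = sum1 (p ++ u::q) F + sum1 (p ++ v::q) F.
Proof.
elim: p F => [|y p IH] F H1 H2 /=.
  rewrite !sum1_cons H1 //.
  rewrite (@sum1_ext _ _ q (fun a r => F a ((u + v) :: r))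
      (fun a r => F a (u :: r) + F a (v :: r))); last first.
    by move=> a r hr; apply: (H2 a [::] r) => /=; lia.
  by rewrite sum1D opprD addrACA.
rewrite !sum1_cons (H2 y p q) //.
rewrite IH; first by rewrite opprD addrACA.
  by move=> a1 a2 r hr; apply: H1 => /=; lia.
by move=> a p0 q0 x z hr; apply: (H2 a (y :: p0)) => /=; lia.
Qed.

Lemma AddS2 (p q : seq g) (u v : g) (F : g -> g -> seq g -> g) :
 (forall a1 a2 b r, (size r).+2 = (size p + size q)%N.+1 -> F (a1 + a2) b r = F a1 b r + F a2 b r) ->
 (forall a b1 b2 r, (size r).+2 = (size p + size q)%N.+1 -> F a (b1 + b2) r = F a b1 r + F a b2 r) ->
 (forall a b (p0 q0 : seq g) (x y : g), (size p0 + size q0)%N.+3 = (size p + size q)%N.+1 ->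
     F a b (p0 ++ (x+y)::q0) = F a b (p0 ++ x::q0) + F a b (p0 ++ y :: q0)) ->
 sum2 (p ++ (u+v)::q) F = sum2 (p ++ u::q) F + sum2 (p ++ v::q) F.
Proof.
elim: p F => [|y p IH] F H1 H1b H2 /=.
  rewrite !sum2_cons.
  rewrite (@sum1_ext _ _ q (F (u + v)) (fun b r => F u b r + F v b r)); last first.
    by move=> b r hr; apply: H1 => /=; lia.
  rewrite (@sum2_ext _ _ q (fun a b r => F a b ((u + v) :: r))
      (fun a b r => F a b (u :: r) + F a b (v :: r))); last first.
    by move=> a b r hr; apply: (H2 a b [::] r) => /=; lia.
  by rewrite sum1D sum2D opprD addrACA.
rewrite !sum2_cons (@AddS1 p q u v (F y)); first last.
- by move=> a p0 q0 x z hr; apply: H2 => /=; lia.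
- by move=> a1 a2 r hr; apply: H1b => /=; lia.
rewrite IH; first by rewrite opprD addrACA.
- by move=> a1 a2 b r hr; apply: H1 => /=; lia.
- by move=> a b1 b2 r hr; apply: H1b => /=; lia.
by move=> a b p0 q0 x z hr; apply: (H2 a b (y :: p0)) => /=; lia.
Qed.


Lemma dCE_slot (br : g -> g -> g) (hL : is_lie_bracket br) (f : cochain g) m :
 (forall (p q : seq g) (x y : g), (size p + size q)%N.+1 = m ->
     f (p ++ (x+y)::q) = f (p ++ x::q) + f (p ++ y::q)) ->
 forall (p q : seq g) (x y : g), (size p + size q)%N.+1 = m.+1 ->
   dCE br (ad br) f (p ++ (x+y)::q) = dCE br (ad br) f (p ++ x::q) + dCE br (ad br) f (p ++ y::q).
Proof.
move=> fD p q x y hs; rewrite !dCE_E AddS1; first last.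
- move=> a p0 q0 u v hr; rewrite /ad fD ?br_addr //; lia.
- by move=> a1 a2 r _; rewrite /ad br_addl.
rewrite AddS2; first by rewrite addrACA.
- by move=> a1 a2 b r hr; rewrite br_addl // (fD [::] r) //=; lia.
- by move=> a b1 b2 r hr; rewrite br_addr // (fD [::] r) //=; lia.
by move=> a b p0 q0 u v hr; rewrite (fD (br a b :: p0) q0) //=; lia.
Qed.

Definition mkS m (b : bool) (S : {set 'I_m}) : {set 'I_m.+1} :=
  [set i : 'I_m.+1 | if unlift ord0 i is Some j then j \in S else b].

Lemma set_decomp m (F : {set 'I_m.+1} -> g) :
  \sum_(S : {set 'I_m.+1}) F S =
  \sum_(S : {set 'I_m}) F (mkS true S) + \sum_(S : {set 'I_m}) F (mkS false S).
Proof.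
rewrite (reindex (fun p : bool * {set 'I_m} => mkS p.1 p.2)) /=; last first.
  apply: onW_bij; exists (fun S : {set 'I_m.+1} => (ord0 \in S, [set j : 'I_m | lift ord0 j \in S])).
    move=> [b S] /=; congr (_, _); first by rewrite inE unlift_none.
    by apply/setP => j; rewrite !inE liftK.
  move=> S; apply/setP => i; rewrite inE.
  by case: (unliftP ord0 i) => [j ->|->]; rewrite ?inE.
by rewrite -(pair_bigA _ (fun b S => F (mkS b S))) big_bool.
Qed.

Lemma Texp (D : g -> g) m (h : seq g -> g) (s : seq g) : size s = m ->
  (forall (p q : seq g) (x y : g), (size p + size q)%N.+1 = m ->
     h (p ++ (x+y)::q) = h (p ++ x::q) + h (p ++ y::q)) ->
  \sum_(S : {set 'I_m}) h [seq (if i \in S then D (nth 0 s i) else nth 0 s i) | i <- enum 'I_m]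
  = h [seq x + D x | x <- s].
Proof.
elim: m h s => [|m IH] h s hs hD.
  case: s hs => // _; rewrite (big_pred1 set0) //= ?enum_ord0 //.
  by move=> S /=; apply/esym/eqP/setP => -[].
case: s hs => // s0 s [hs].
rewrite set_decomp.
have E : forall b S, [seq (if i \in mkS b S then D (nth 0 (s0 :: s) i) else nth 0 (s0 :: s) i) | i <- enum 'I_m.+1]
   = (if b then D s0 else s0) :: [seq (if j \in S then D (nth 0 s j) else nth 0 s j) | j <- enum 'I_m].
  move=> b S; rewrite enum_ordSl /= -map_comp; congr (_ :: _).
    by rewrite inE unlift_none.
  by apply: eq_map => j /=; rewrite inE liftK ?lift0.
under eq_bigr do rewrite E.
under [X in _ + X]eq_bigr do rewrite E.
rewrite /= (IH (fun r => h (D s0 :: r))) //; last first.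
  by move=> p q x y hpq; apply: (hD (D s0 :: p)) => /=; rewrite ?addSn hpq.
rewrite (IH (fun r => h (s0 :: r))) //; last first.
  by move=> p q x y hpq; apply: (hD (s0 :: p)) => /=; rewrite ?addSn hpq.
rewrite addrC /= (hD [::] [seq x + D x | x <- s] s0 (D s0)) //=.
by rewrite size_map hs.
Qed.

End Add.



Section Fin.
Variables (K : fieldType) (g : lmodType K).

Lemma sum1Z (c : K) (s : seq g) F : sum1 s (fun a r => c *: F a r) = c *: sum1 s F.
Proof.
by rewrite (@sum1_lin _ _ (fun x => c *: x)) // => c' x y; rewrite scalerDr !scalerA mulrC.
Qed.
Lemma sum2Z (c : K) (s : seq g) F : sum2 s (fun a b r => c *: F a b r) = c *: sum2 s F.
Proof.
by rewrite (@sum2_lin _ _ (fun x => c *: x)) // => c' x y; rewrite scalerDr !scalerA mulrC.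
Qed.

Lemma dCE_ext (br rho : g -> g -> g) (f h : cochain g) s :
  (forall r, (size r).+1 = size s -> f r = h r) -> dCE br rho f s = dCE br rho h s.
Proof.
move=> E; rewrite !dCE_E; congr (_ + _).
  by apply: sum1_ext => a r hr; rewrite E.
by apply: sum2_ext => a b r hr; rewrite E //= hr.
Qed.

Lemma dCE_add (br rho : g -> g -> g) (f h : cochain g) s :
  (forall a x y, rho a (x + y) = rho a x + rho a y) ->
  dCE br rho (fun r => f r + h r) s = dCE br rho f s + dCE br rho h s.
Proof.
move=> rD; rewrite !dCE_E.
rewrite (@sum1_ext _ _ s (fun a r => rho a (f r + h r)) (fun a r => rho a (f r) + rho a (h r))); last by move=> *; rewrite rD.
by rewrite sum1D sum2D addrACA.
Qed.

Lemma dCE_scale (br rho : g -> g -> g) (f : cochain g) (c : K) s :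
  (forall a c x, rho a (c *: x) = c *: rho a x) ->
  dCE br rho (fun r => c *: f r) s = c *: dCE br rho f s.
Proof.
move=> rZ; rewrite !dCE_E.
rewrite (@sum1_ext _ _ s (fun a r => rho a (c *: f r)) (fun a r => c *: rho a (f r))); last by move=> *; rewrite rZ.
by rewrite sum1Z sum2Z scalerDr.
Qed.

Variables (br : g -> g -> g) (D : g -> g).
Hypothesis hd : is_difference_lie br D.

Let hL : is_lie_bracket br. Proof. by case: hd. Qed.
Let hDl : is_linear_map D. Proof. by case: hd. Qed.
Let hDb : forall x y, D (br x y) = br x (D y) - br y (D x) + br (D x) (D y).
Proof. by case: hd. Qed.

Definition phi (x : g) := x + D x.

Lemma D_add x y : D (x + y) = D x + D y.
Proof. by have := hDl 1 x y; rewrite !scale1r. Qed.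
Lemma phi_lin c x y : phi (c *: x + y) = c *: phi x + phi y.
Proof. by rewrite /phi hDl scalerDr addrACA. Qed.
Lemma phi_br a b : phi (br a b) = br (phi a) (phi b).
Proof.
rewrite /phi hDb !(br_addl hL) !(br_addr hL) (br_anti hL (D a) b).
by rewrite !addrA [br a b + br a (D b) - _]addrC.
Qed.

Lemma adD_phi a u : adD br D a u = ad br (phi a) u.
Proof. by rewrite /adD /ad /phi (br_addl hL). Qed.
Lemma ad_lin a c x y : ad br a (c *: x + y) = c *: ad br a x + ad br a y.
Proof. by case: hL => _ l2 _ _; rewrite /ad l2. Qed.
Lemma adD_lin a c x y : adD br D a (c *: x + y) = c *: adD br D a x + adD br D a y.
Proof. by rewrite !adD_phi ad_lin. Qed.
Lemma adD_add a x y : adD br D a (x + y) = adD br D a x + adD br D a y.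
Proof. by have := adD_lin a 1 x y; rewrite !scale1r. Qed.
Lemma ad_add a x y : ad br a (x + y) = ad br a x + ad br a y.
Proof. by have := ad_lin a 1 x y; rewrite !scale1r. Qed.
Lemma adD_Z a c x : adD br D a (c *: x) = c *: adD br D a x.
Proof. by rewrite /adD !(br_scaler hL) scalerDr. Qed.
Lemma ad_rep a b v : ad br (br a b) v = ad br a (ad br b v) - ad br b (ad br a v).
Proof. exact: br_rep. Qed.
Lemma adD_rep a b v : adD br D (br a b) v = adD br D a (adD br D b v) - adD br D b (adD br D a v).
Proof. by rewrite !adD_phi phi_br ad_rep. Qed.
Lemma adD_phiv a v : adD br D a (phi v) = phi (br a v).
Proof.
rewrite adD_phi /ad /phi hDb !(br_addl hL) !(br_addr hL) (br_anti hL v (D a)).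
by rewrite opprK !addrA.
Qed.

Lemma dCE_phi (f : cochain g) s :
  dCE br (adD br D) (fun r => f (map phi r)) s = dCE br (ad br) f (map phi s).
Proof.
rewrite !dCE_E sum1_map sum2_map; congr (_ + _).
  by apply: sum1_ext => a r _; rewrite adD_phi.
by apply: sum2_ext => a b r _ /=; rewrite phi_br.
Qed.

Lemma dCE_phi2 (f : cochain g) s :
  dCE br (adD br D) (fun r => phi (f r)) s = phi (dCE br (ad br) f s).
Proof.
have phiD : forall x y, phi (x + y) = phi x + phi y by move=> x y; have := phi_lin 1 x y; rewrite !scale1r.
rewrite !dCE_E phiD.
rewrite (@sum1_lin _ _ phi) ?(@sum2_lin _ _ phi); try exact: phi_lin.
by congr (_ + _); apply: sum1_ext => a r _; rewrite adD_phiv.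
Qed.

Lemma TopE m (h : cochain g) r : size r = m ->
  (forall (p q : seq g) (x y : g), (size p + size q)%N.+1 = m ->
     h (p ++ (x+y)::q) = h (p ++ x::q) + h (p ++ y::q)) ->
  Top D m h r = (-1) ^+ m *: (h (map phi r) - phi (h r)).
Proof.
move=> hr hD; have HT := Texp D hr hD.
rewrite (bigD1 set0) //= in HT.
have E0 : [seq (if i \in (set0 : {set 'I_m}) then D (nth 0 r i) else nth 0 r i) | i <- enum 'I_m] = r.
  rewrite (eq_map (g := fun i : 'I_m => nth 0 r i)); last by move=> i; rewrite in_set0.
  have -> : [seq nth 0 r i | i : 'I_m <- enum 'I_m] = [seq nth 0 r i | i <- map val (enum 'I_m)] by rewrite -map_comp.
  by rewrite val_enum_ord -hr -/(mkseq _ _) mkseq_nth.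
rewrite E0 in HT.
rewrite /Top; congr (_ *: _).
have -> : \sum_(S : {set 'I_m} | S != set0)
     h [seq (if i \in S then D (nth 0 r i) else nth 0 r i) | i <- enum 'I_m] =
     h [seq x + D x | x <- r] - h r by rewrite -HT [h r + _]addrC addrK.
by rewrite /phi opprD addrA.
Qed.

Lemma T_identity n (f : cochain g) :
  (forall (p q : seq g) (x y : g), (size p + size q)%N.+1 = n ->
     f (p ++ (x+y)::q) = f (p ++ x::q) + f (p ++ y::q)) ->
  forall s, size s = n.+1 ->
  dCE br (adD br D) (Top D n f) s + Top D n.+1 (dCE br (ad br) f) s = 0.
Proof.
move=> fD s hs.
rewrite (@dCE_ext _ _ _ (fun r => (-1) ^+ n *: (f (map phi r) + - phi (f r)))); last first.
  by move=> r hr; apply: TopE => //; move: hr; rewrite hs => -[].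
rewrite dCE_scale; last exact: adD_Z.
rewrite dCE_add; last exact: adD_add.
rewrite (@dCE_ext _ _ (fun r => - phi (f r)) (fun r => (-1) *: phi (f r))); last by move=> *; rewrite scaleN1r.
rewrite dCE_scale; last exact: adD_Z.
rewrite dCE_phi dCE_phi2 scaleN1r.
rewrite (TopE hs); last exact: (dCE_slot hL fD).
by rewrite exprS mulN1r scaleNr subrr.
Qed.

End Fin.



Lemma alt_add (K : fieldType) (g : lmodType K) m (f : cochain g) : is_alt_multilinear m f ->
  forall (p q : seq g) (x y : g), (size p + size q)%N.+1 = m ->
     f (p ++ (x+y)::q) = f (p ++ x::q) + f (p ++ y::q).
Proof. by case=> l _ p q x y h; have := l p q 1 x y h; rewrite !scale1r. Qed.

Lemma alt_add0 (K : fieldType) (g : lmodType K) m (f : cochain g) : is_alt_multilinear m f ->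
  forall (u v : g) (r : seq g), (size r).+1 = m -> f ((u+v)::r) = f (u::r) + f (v::r).
Proof. by move=> hf u v r h; exact: (@alt_add _ _ _ _ hf [::] r u v h). Qed.

Lemma alt_swap (K : fieldType) (g : lmodType K) m (f : cochain g) : is_alt_multilinear m f ->
  forall a b r, (size r).+2 = m -> f (a::b::r) = - f (b::a::r).
Proof.
move=> hf; have fD := alt_add hf; case: hf => _ al a b r h.
have Z : forall x, f (x :: x :: r) = 0 by move=> x; exact: (al [::] [::] r x h).
have E1 := fD [::] ((a + b) :: r) a b h.
have E2 := fD [:: a] r a b h.
have E3 := fD [:: b] r a b h.
simpl in E1, E2, E3.
have := Z (a + b); rewrite E1 E2 E3 !Z add0r addr0 => /eqP.
by rewrite addr_eq0 => /eqP.
Qed.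

Theorem theorem4p1 (K : fieldType) (g : lmodType K) (br : g -> g -> g) (D : g -> g) :
  is_difference_lie br D ->
  (forall f : cochain g, is_alt_multilinear 1 f ->
     let q := dbar br D 2 (dbar1 br D f) in
     (forall s : seq g, size s = 3%N -> q.1 s = 0) /\
     (forall s : seq g, size s = 2%N -> q.2 s = 0)) /\
  (forall (n : nat) (f theta : cochain g), (2 <= n)%N ->
     is_alt_multilinear n f -> is_alt_multilinear n.-1 theta ->
     let q := dbar br D n.+1 (dbar br D n (f, theta)) in
     (forall s : seq g, size s = n.+2 -> q.1 s = 0) /\
     (forall s : seq g, size s = n.+1 -> q.2 s = 0)).
Proof.
move=> hd; have hL : is_lie_bracket br by case: hd.
split.
  move=> f hf /=; split => s hs.
    apply: (dd0 hL _ _ (alt_add0 hf) (alt_swap hf)) => //.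
      exact: ad_lin hd.
    exact: ad_rep hd.
  rewrite /cadd; exact: (T_identity hd (alt_add hf)).
move=> n f th hn hf hth /=; split => s hs.
  apply: (dd0 hL _ _ (alt_add0 hf) (alt_swap hf)) => //.
    exact: ad_lin hd.
  exact: ad_rep hd.
rewrite /cadd dCE_add; last exact: adD_add hd.
rewrite (dd0 hL _ _ (alt_add0 hth) (alt_swap hth)); first last.
- by rewrite hs; case: n hn {hf hth hs} => [|[]].
- exact: adD_rep hd.
- exact: adD_lin hd.
by rewrite add0r (T_identity hd (alt_add hf)).
Qed.
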